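(* Let $(H,\prec)$ be an elementary POP-graph with exactly one internal vertex, and let $(G_1,\prec_1),(G_2,\prec_2)$ be POP-graphs. (1) If the compositions are defined and $(H,\prec)\circ(G_1,\prec_1)=(H,\prec)\circ(G_2,\prec_2)$, then $(G_1,\prec_1)=(G_2,\prec_2)$. (2) If the compositions are defined and $(G_1,\prec_1)\circ(H,\prec)=(G_2,\prec_2)\circ(H,\prec)$, then $(G_1,\prec_1)=(G_2,\prec_2)$.
   Context: A progressive graph is a finite directed acyclic graph (parallel edges allowed) in which every source and every sink has degree one; degree-one vertices are boundary vertices, the others internal. It is elementary if each connected component has at most one internal vertex. An input edge is an edge whose initial vertex is a boundary vertex; an output edge one whose terminal vertex is a boundary vertex. For edges write $e\to e'$ if $e\neq e'$ and there is a directed path whose first edge is $e$ and last edge is $e'$. A planar order on $G$ is a linear order $\prec$ on $E(G)$ such that (P1) $e_1\to e_2$ implies $e_1\prec e_2$; (P2) if $e_1\prec e_2\prec e_3$ and $e_1\to e_3$ then $e_1\to e_2$ or $e_2\to e_3$. A POP-graph is a progressive graph with a planar order. Equality of POP-graphs means isomorphism: bijections of vertices and edges preserving incidence, direction and the planar orders. Composition: let $(G_1,\prec_1)$, $(G_2,\prec_2)$ be POP-graphs, $G_1$ with output edges $o_1\prec_1\cdots\prec_1 o_n$ and $G_2$ with input edges $i_1\prec_2\cdots\prec_2 i_n$ (composition is defined when these numbers agree). $G_2\circ G_1$ is obtained from $G_1\sqcup G_2$ by deleting the sinks of $G_1$, the sources of $G_2$ and the edges $o_k,i_k$, and adding for each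 $k$ a new edge $\overline{e_k}$ from the initial vertex of $o_k$ to the terminal vertex of $i_k$. With $Q_1=\{e\in E(G_1): e\prec_1 o_1\}$, $Q_k=\{e: o_{k-1}\prec_1 e\prec_1 o_k\}$, $P_k=\{e\in E(G_2): i_k\prec_2 e\prec_2 i_{k+1}\}$ ($k<n$), $P_n=\{e: i_n\prec_2 e\}$, the order $\prec_2\circ\prec_1$ lists $Q_1,\{\overline{e_1}\},P_1,\dots,Q_n,\{\overline{e_n}\},P_n$ consecutively, each $Q_k$ ordered by $\prec_1$, each $P_k$ by $\prec_2$; $(G_2,\prec_2)\circ(G_1,\prec_1):=(G_2\circ G_1,\prec_2\circ\prec_1)$. *)

(* Defs.v *)
From HB Require Import structures.
From mathcomp Require Import all_boot.
Set Implicit Arguments. Unset Strict Implicit. Unset Printing Implicit Defensive.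

Record graph := Graph {
  gV : finType;
  gE : finType;
  gsrc : gE -> gV;
  gtgt : gE -> gV }.

Section GraphDefs.
Variable G : graph.
Local Notation V := (gV G).
Local Notation E := (gE G).
Local Notation src := (@gsrc G).
Local Notation tgt := (@gtgt G).

Definition indeg (v : V) : nat := #|[set e | tgt e == v]|.
Definition outdeg (v : V) : nat := #|[set e | src e == v]|.
Definition deg (v : V) : nat := indeg v + outdeg v.

Definition is_source (v : V) : bool := [forall e, tgt e != v].
Definition is_sink (v : V) : bool := [forall e, src e != v].

Definition boundary (v : V) : bool := deg v == 1.
Definition internal (v : V) : bool := ~~ boundary v.

Definition enext : rel E := fun e f => tgt e == src f.
Definition epath (e e' : E) : bool := (e != e') && connect enext e e'.

Definition acyclic : Prop := forall e f : E, enext e f -> ~~ connect enext f e.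

Definition progressive : Prop :=
  acyclic /\
  (forall v : V, is_source v -> deg v = 1) /\
  (forall v : V, is_sink v -> deg v = 1).

Definition vadj : rel V :=
  fun u v => [exists e, ((src e == u) && (tgt e == v)) || ((src e == v) && (tgt e == u))].

Definition elementary : Prop :=
  forall u v : V, internal u -> internal v -> connect vadj u v -> u = v.

Definition input_edge (e : E) : bool := boundary (src e).
Definition output_edge (e : E) : bool := boundary (tgt e).

Definition linear_order (lt : rel E) : Prop :=
  (forall e, ~~ lt e e) /\
  (forall e1 e2 e3, lt e1 e2 -> lt e2 e3 -> lt e1 e3) /\
  (forall e1 e2, e1 != e2 -> lt e1 e2 || lt e2 e1).

Definition planar_order (lt : rel E) : Prop :=
  linear_order lt /\
  (forall e1 e2, epath e1 e2 -> lt e1 e2) /\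
  (forall e1 e2 e3, lt e1 e2 -> lt e2 e3 -> epath e1 e3 ->
     epath e1 e2 \/ epath e2 e3).

Lemma src_not_sink (e : E) : ~~ is_sink (src e).
Proof. by apply/forallPn; exists e; rewrite negbK. Qed.

Lemma tgt_not_source (e : E) : ~~ is_source (tgt e).
Proof. by apply/forallPn; exists e; rewrite negbK. Qed.

End GraphDefs.

Record popgraph := POP { pg : graph; plt : rel (gE pg) }.

Definition is_pop (P : popgraph) : Prop :=
  progressive (pg P) /\ planar_order (@plt P).

Definition n_internal (G : graph) : nat := #|[set v : gV G | internal v]|.

Definition n_inputs (P : popgraph) : nat := #|[set e : gE (pg P) | input_edge e]|.
Definition n_outputs (P : popgraph) : nat := #|[set e : gE (pg P) | output_edge e]|.

Definition comp_defined (P1 P2 : popgraph) : Prop := n_outputs P1 = n_inputs P2.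

(* Equality of POP-graphs: isomorphism preserving incidence, direction and
   planar orders. *)
Definition pop_iso (P Q : popgraph) : Prop :=
  exists (fV : gV (pg P) -> gV (pg Q)) (fE : gE (pg P) -> gE (pg Q)),
    [/\ bijective fV, bijective fE,
        forall e, gsrc (fE e) = fV (gsrc e),
        forall e, gtgt (fE e) = fV (gtgt e) &
        forall e e', plt (fE e) (fE e') = plt e e'].

(* Composition  comp P1 P2 = P2 o P1  (P1 first, then P2).                 *)
Section Comp.
Variables P1 P2 : popgraph.
Local Notation G1 := (pg P1).
Local Notation G2 := (pg P2).
Local Notation lt1 := (@plt P1).
Local Notation lt2 := (@plt P2).

(* rank of an edge = number of output (resp. input) edges strictly below it;
   the k-th output o_k (1-based) has rank k-1, and the edges of Q_k are the
   non-output edges of G1 of rank k-1; the edges of P_k are the non-input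
   edges of G2 with exactly k inputs below them. *)
Definition rankO (e : gE G1) : nat := #|[set o : gE G1 | output_edge o && lt1 o e]|.
Definition rankI (e : gE G2) : nat := #|[set i : gE G2 | input_edge i && lt2 i e]|.

Definition match_in (o : gE G1) : option (gE G2) :=
  [pick i : gE G2 | input_edge i && (rankI i == rankO o)].

Definition compV : finType :=
  ({v : gV G1 | ~~ is_sink v} + {v : gV G2 | ~~ is_source v})%type.

(* Edges: non-output edges of G1, non-input edges of G2, and one new edge
   \bar e_k for each output edge o_k of G1 (indexed by o_k). *)
Definition compE : finType :=
  (({e : gE G1 | ~~ output_edge e} + {e : gE G2 | ~~ input_edge e})
    + {o : gE G1 | output_edge o})%type.

(* inclusion of vertices; the fallback is never used for well-formed inputs *)
Definition lift1 (e : gE G1) (v : gV G1) : compV :=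
  match insub v with
  | Some u => inl u
  | None => inl (Sub (gsrc e) (src_not_sink e))
  end.
Definition lift2 (e : gE G2) (v : gV G2) : compV :=
  match insub v with
  | Some u => inr u
  | None => inr (Sub (gtgt e) (tgt_not_source e))
  end.

Definition comp_src (c : compE) : compV :=
  match c with
  | inl (inl e) => lift1 (val e) (gsrc (val e))
  | inl (inr e) => lift2 (val e) (gsrc (val e))
  | inr o => lift1 (val o) (gsrc (val o))
  end.

Definition comp_tgt (c : compE) : compV :=
  match c with
  | inl (inl e) => lift1 (val e) (gtgt (val e))
  | inl (inr e) => lift2 (val e) (gtgt (val e))
  | inr o => match match_in (val o) with
             | Some i => lift2 i (gtgt i)
             | None => lift1 (val o) (gsrc (val o))
             end
  end.

Definition comp_graph : graph := @Graph compV compE comp_src comp_tgt.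

(* block index: Q_k -> 3(k-1), \bar e_k -> 3(k-1)+1, P_k -> 3(k-1)+2 *)
Definition blk (c : compE) : nat :=
  match c with
  | inl (inl e) => 3 * rankO (val e)
  | inr o => 3 * rankO (val o) + 1
  | inl (inr e) => 3 * rankI (val e) - 1
  end.

Definition within (c d : compE) : bool :=
  match c, d with
  | inl (inl e), inl (inl f) => lt1 (val e) (val f)
  | inl (inr e), inl (inr f) => lt2 (val e) (val f)
  | inr o, inr o' => lt1 (val o) (val o')
  | _, _ => false
  end.

Definition comp_lt : rel compE :=
  fun c d => (blk c < blk d) || ((blk c == blk d) && within c d).

Definition comp : popgraph := @POP comp_graph comp_lt.

End Comp.

Notation "P2 \oo P1" := (comp P1 P2) (at level 40, left associativity).

(* Main.v *)
Require Import Defs.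
From mathcomp Require Import all_boot zify.
Set Implicit Arguments. Unset Strict Implicit. Unset Printing Implicit Defensive.


Section Rank.
Variable T : finType.
Variable lt : rel T.
Hypothesis irr : forall e, ~~ lt e e.
Hypothesis trans : forall e1 e2 e3, lt e1 e2 -> lt e2 e3 -> lt e1 e3.
Hypothesis tot : forall e1 e2, e1 != e2 -> lt e1 e2 || lt e2 e1.
Variable A : pred T.

Definition rk (a : T) : nat := #|[set b | A b && lt b a]|.

Lemma rk_le a b : lt a b -> rk a <= rk b.
Proof.
move=> ab; apply: subset_leq_card; apply/subsetP=> x; rewrite !inE.
by case/andP=> -> xa; exact: trans xa ab.
Qed.

Lemma rk_lt a b : A a -> lt a b -> rk a < rk b.
Proof.
move=> Aa ab; apply: proper_card; apply/properP; split.
  apply/subsetP=> x; rewrite !inE.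
  by case/andP=> -> xa; exact: trans xa ab.
by exists a; rewrite !inE ?Aa ?ab ?irr // andbF.
Qed.

Lemma rk_lt_lt a b : rk a < rk b -> lt a b.
Proof.
move=> h; case: (eqVneq a b) => [e|ne]; first by rewrite e ltnn in h.
case/orP: (tot ne) => // ba.
by have := rk_le ba; rewrite leqNgt h.
Qed.

Lemma rk_inj a b : A a -> A b -> rk a = rk b -> a = b.
Proof.
move=> Aa Ab e; case: (eqVneq a b) => // ne.
case/orP: (tot ne) => h.
  by have := rk_lt Aa h; rewrite e ltnn.
by have := rk_lt Ab h; rewrite e ltnn.
Qed.

Lemma rk_bound a : A a -> rk a < #|[set b | A b]|.
Proof.
move=> Aa; apply: proper_card; apply/properP; split.
  by apply/subsetP=> x; rewrite !inE; case/andP.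
by exists a; rewrite !inE ?Aa ?irr // andbF.
Qed.

Lemma rk_surj k : k < #|[set b | A b]| -> exists2 a, A a & rk a = k.
Proof.
move=> hk.
set S := [set b | A b].
pose s := map rk (enum S).
have us : uniq s.
  rewrite map_inj_in_uniq ?enum_uniq // => x y.
  by rewrite !mem_enum !inE => Ax Ay; apply: rk_inj.
have sub : {subset s <= iota 0 #|S|}.
  move=> x /mapP [b]; rewrite mem_enum inE => Ab ->.
  by rewrite mem_iota add0n rk_bound.
have [_ eqs] := uniq_min_size us sub (eq_leq (etrans (size_iota _ _) (esym (etrans (size_map _ _) (esym (cardE _)))))).
have : k \in s by rewrite eqs mem_iota add0n.
by case/mapP=> b; rewrite mem_enum inE => Ab ->; exists b.
Qed.

End Rank.


Section GraphFacts.
Variable G : graph.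
Local Notation V := (gV G).
Local Notation E := (gE G).
Local Notation src := (@gsrc G).
Local Notation tgt := (@gtgt G).
Hypothesis pr : progressive G.

Lemma sink_deg (v : V) : is_sink v -> deg v = 1.
Proof. by case: pr => _ [_ h]; apply: h. Qed.
Lemma source_deg (v : V) : is_source v -> deg v = 1.
Proof. by case: pr => _ [h _]; apply: h. Qed.

Lemma outdeg0 (v : V) : (outdeg v == 0) = is_sink v.
Proof.
rewrite /outdeg cards_eq0; apply/idP/idP=> [/eqP h|/forallP h].
  apply/forallP=> e; apply/negP=> /eqP ev; have : e \in [set e | src e == v] by rewrite inE ev.
  by rewrite h inE.
by apply/eqP/setP=> e; rewrite !inE (negbTE (h e)).
Qed.
Lemma indeg0 (v : V) : (indeg v == 0) = is_source v.
Proof.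
rewrite /indeg cards_eq0; apply/idP/idP=> [/eqP h|/forallP h].
  apply/forallP=> e; apply/negP=> /eqP ev; have : e \in [set e | tgt e == v] by rewrite inE ev.
  by rewrite h inE.
by apply/eqP/setP=> e; rewrite !inE (negbTE (h e)).
Qed.

Lemma bnd_tgt_sink (e : E) : boundary (tgt e) -> is_sink (tgt e).
Proof.
rewrite /boundary /deg => /eqP h; rewrite -outdeg0.
have : 0 < indeg (tgt e) by apply/card_gt0P; exists e; rewrite inE.
by move=> h0; apply/eqP; lia.
Qed.
Lemma bnd_src_source (e : E) : boundary (src e) -> is_source (src e).
Proof.
rewrite /boundary /deg => /eqP h; rewrite -indeg0.
have : 0 < outdeg (src e) by apply/card_gt0P; exists e; rewrite inE.
by move=> h0; apply/eqP; lia.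
Qed.

Lemma output_sink (e : E) : output_edge e -> is_sink (tgt e).
Proof. exact: bnd_tgt_sink. Qed.
Lemma input_source (e : E) : input_edge e -> is_source (src e).
Proof. exact: bnd_src_source. Qed.

Lemma nonoutput_nonsink (e : E) : ~~ output_edge e -> ~~ is_sink (tgt e).
Proof. by apply: contra => /sink_deg h; rewrite /output_edge /boundary h. Qed.
Lemma noninput_nonsource (e : E) : ~~ input_edge e -> ~~ is_source (src e).
Proof. by apply: contra => /source_deg h; rewrite /input_edge /boundary h. Qed.

Lemma output_unique (e f : E) : output_edge e -> tgt f = tgt e -> f = e.
Proof.
rewrite /output_edge /boundary /deg => /eqP h ef.
case: (eqVneq f e) => // ne.
have : 2 <= indeg (tgt e).
  have <- : #|[set f; e]| = 2 by rewrite cards2 ne.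
  apply: subset_leq_card; apply/subsetP=> x.
  by rewrite !inE => /orP [] /eqP ->; rewrite ?ef eqxx.
lia.
Qed.
Lemma input_unique (e f : E) : input_edge e -> src f = src e -> f = e.
Proof.
rewrite /input_edge /boundary /deg => /eqP h ef.
case: (eqVneq f e) => // ne.
have : 2 <= outdeg (src e).
  have <- : #|[set f; e]| = 2 by rewrite cards2 ne.
  apply: subset_leq_card; apply/subsetP=> x.
  by rewrite !inE => /orP [] /eqP ->; rewrite ?ef eqxx.
lia.
Qed.

Lemma sink_in (v : V) : is_sink v -> exists2 e, output_edge e & tgt e = v.
Proof.
move=> sv; have d := sink_deg sv; move: (sv); rewrite -outdeg0 => /eqP o.
move: d; rewrite /deg o addn0 => d.
have : 0 < indeg v by rewrite d.
case/card_gt0P=> e; rewrite inE => /eqP ev; exists e => //.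
by rewrite /output_edge ev /boundary /deg o addn0 d.
Qed.
Lemma source_out (v : V) : is_source v -> exists2 e, input_edge e & src e = v.
Proof.
move=> sv; have d := source_deg sv; move: (sv); rewrite -indeg0 => /eqP o.
move: d; rewrite /deg o add0n => d.
have : 0 < outdeg v by rewrite d.
case/card_gt0P=> e; rewrite inE => /eqP ev; exists e => //.
by rewrite /input_edge ev /boundary /deg o add0n d.
Qed.

Lemma internal_nonsink (v : V) : internal v -> ~~ is_sink v.
Proof. by apply: contraL => /sink_deg h; rewrite /internal /boundary h. Qed.
Lemma internal_nonsource (v : V) : internal v -> ~~ is_source v.
Proof. by apply: contraL => /source_deg h; rewrite /internal /boundary h. Qed.

Lemma noloop (e : E) : tgt e != src e.
Proof.
case: pr => ac _; apply/negP=> h.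
by have := ac e e h; rewrite connect0.
Qed.

End GraphFacts.


Lemma rk_lex (T : finType) (lt : rel T) (irr : forall e, ~~ lt e e)
  (trans : forall e1 e2 e3, lt e1 e2 -> lt e2 e3 -> lt e1 e3)
  (tot : forall e1 e2, e1 != e2 -> lt e1 e2 || lt e2 e1) (A : pred T) a b :
  (rk lt A a < rk lt A b) || (rk lt A a == rk lt A b) && lt a b = lt a b.
Proof.
case ab: (lt a b).
  by have := rk_le trans A ab; rewrite leq_eqVlt orbC => /orP [] ->; rewrite ?orbT.
rewrite andbF orbF; apply/negbTE/negP=> /(rk_lt_lt trans tot).
by rewrite ab.
Qed.

Lemma rk_ltA (T : finType) (lt : rel T) (irr : forall e, ~~ lt e e)
  (trans : forall e1 e2 e3, lt e1 e2 -> lt e2 e3 -> lt e1 e3)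
  (tot : forall e1 e2, e1 != e2 -> lt e1 e2 || lt e2 e1) (A : pred T) a b :
  A a -> lt a b = (rk lt A a < rk lt A b).
Proof.
move=> Aa; apply/idP/idP; first exact: rk_lt.
exact: rk_lt_lt.
Qed.

Lemma rk_leA (T : finType) (lt : rel T) (irr : forall e, ~~ lt e e)
  (trans : forall e1 e2 e3, lt e1 e2 -> lt e2 e3 -> lt e1 e3)
  (tot : forall e1 e2, e1 != e2 -> lt e1 e2 || lt e2 e1) (A : pred T) a b :
  ~~ A a -> A b -> lt a b = (rk lt A a <= rk lt A b).
Proof.
move=> Aa Ab; apply/idP/idP; first exact: rk_le.
move=> h; have ne : a != b by apply: contraNneq Aa => ->.
case/orP: (tot _ _ ne) => // ba.
by have := rk_lt irr trans Ab ba; rewrite ltnNge h.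
Qed.

Section CompFacts.
Variables P1 P2 : popgraph.
Local Notation G1 := (pg P1).
Local Notation G2 := (pg P2).
Local Notation lt1 := (@plt P1).
Local Notation lt2 := (@plt P2).
Hypothesis pop1 : is_pop P1.
Hypothesis pop2 : is_pop P2.
Hypothesis cd : comp_defined P1 P2.
Local Notation C := (comp_graph P1 P2).
Local Notation clt := (comp_lt (P1:=P1) (P2:=P2)).

Let pr1 : progressive G1. Proof. by case: pop1. Qed.
Let pr2 : progressive G2. Proof. by case: pop2. Qed.
Let irr1 : forall e, ~~ lt1 e e. Proof. by case: pop1 => _ [[]]. Qed.
Let tr1 : forall e1 e2 e3, lt1 e1 e2 -> lt1 e2 e3 -> lt1 e1 e3.
Proof. by case: pop1 => _ [[_ []]]. Qed.
Let tot1 : forall e1 e2, e1 != e2 -> lt1 e1 e2 || lt1 e2 e1.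
Proof. by case: pop1 => _ [[_ []]]. Qed.
Let irr2 : forall e, ~~ lt2 e e. Proof. by case: pop2 => _ [[]]. Qed.
Let tr2 : forall e1 e2 e3, lt2 e1 e2 -> lt2 e2 e3 -> lt2 e1 e3.
Proof. by case: pop2 => _ [[_ []]]. Qed.
Let tot2 : forall e1 e2, e1 != e2 -> lt2 e1 e2 || lt2 e2 e1.
Proof. by case: pop2 => _ [[_ []]]. Qed.

Lemma rankOE (e : gE G1) : rankO e = rk lt1 (@output_edge G1) e. Proof. by []. Qed.
Lemma rankIE (e : gE G2) : rankI e = rk lt2 (@input_edge G2) e. Proof. by []. Qed.

Lemma rankO_bound (o : gE G1) : output_edge o -> rankO o < n_outputs P1.
Proof. exact: (@rk_bound _ lt1 irr1 (@output_edge G1) o). Qed.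
Lemma rankI_bound (o : gE G2) : input_edge o -> rankI o < n_inputs P2.
Proof. exact: (@rk_bound _ lt2 irr2 (@input_edge G2) o). Qed.
Lemma rankO_surj k : k < n_outputs P1 -> exists2 o : gE G1, output_edge o & rankO o = k.
Proof. exact: (@rk_surj _ lt1 irr1 tr1 tot1 (@output_edge G1) k). Qed.
Lemma rankI_surj k : k < n_inputs P2 -> exists2 o : gE G2, input_edge o & rankI o = k.
Proof. exact: (@rk_surj _ lt2 irr2 tr2 tot2 (@input_edge G2) k). Qed.
Lemma rankO_inj (a b : gE G1) : output_edge a -> output_edge b -> rankO a = rankO b -> a = b.
Proof. exact: (@rk_inj _ lt1 irr1 tr1 tot1 (@output_edge G1) a b). Qed.
Lemma rankI_inj (a b : gE G2) : input_edge a -> input_edge b -> rankI a = rankI b -> a = b.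
Proof. exact: (@rk_inj _ lt2 irr2 tr2 tot2 (@input_edge G2) a b). Qed.

Lemma lift1_in (e : gE G1) (v : gV G1) (h : ~~ is_sink v) : lift1 P2 e v = inl (Sub v h).
Proof. by rewrite /lift1 insubT. Qed.
Lemma lift2_in (e : gE G2) (v : gV G2) (h : ~~ is_source v) : lift2 P1 e v = inr (Sub v h).
Proof. by rewrite /lift2 insubT. Qed.

Lemma src_ll (x : {e : gE G1 | ~~ output_edge e}) :
  comp_src (inl (inl x) : compE P1 P2) = inl (Sub (gsrc (val x)) (src_not_sink _)).
Proof. exact: lift1_in. Qed.
Lemma tgt_ll (x : {e : gE G1 | ~~ output_edge e}) :
  comp_tgt (inl (inl x) : compE P1 P2) = inl (Sub (gtgt (val x)) (nonoutput_nonsink pr1 (valP x))).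
Proof. exact: lift1_in. Qed.
Lemma src_lr (y : {e : gE G2 | ~~ input_edge e}) :
  comp_src (inl (inr y) : compE P1 P2) = inr (Sub (gsrc (val y)) (noninput_nonsource pr2 (valP y))).
Proof. exact: lift2_in. Qed.
Lemma tgt_lr (y : {e : gE G2 | ~~ input_edge e}) :
  comp_tgt (inl (inr y) : compE P1 P2) = inr (Sub (gtgt (val y)) (tgt_not_source _)).
Proof. exact: lift2_in. Qed.
Lemma src_o (o : {e : gE G1 | output_edge e}) :
  comp_src (inr o : compE P1 P2) = inl (Sub (gsrc (val o)) (src_not_sink _)).
Proof. exact: lift1_in. Qed.

Lemma match_spec (o : gE G1) (i : gE G2) : match_in P2 o = Some i -> input_edge i /\ rankI i = rankO o.
Proof.
rewrite /match_in; case: pickP => // j /andP [ij /eqP e] [<-]; split=> //.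
Qed.

Lemma match_ex (o : gE G1) : output_edge o -> exists i, match_in P2 o = Some i.
Proof.
move=> oo.
have : rankO o < n_inputs P2 by rewrite -cd rankO_bound.
move=> /rankI_surj [i ii ri].
rewrite /match_in; case: pickP => [j _|]; first by exists j.
by move=> /(_ i); rewrite ii ri eqxx.
Qed.

Lemma match_inj (o o' : gE G1) (i : gE G2) : output_edge o -> output_edge o' ->
  match_in P2 o = Some i -> match_in P2 o' = Some i -> o = o'.
Proof.
move=> oo oo' /match_spec [_ r1] /match_spec [_ r2].
by apply: rankO_inj oo oo' _; rewrite -r1 -r2.
Qed.

Lemma match_surj (i : gE G2) : input_edge i -> exists2 o : gE G1, output_edge o & match_in P2 o = Some i.
Proof.
move=> ii.
have : rankI i < n_outputs P1 by rewrite cd rankI_bound.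
move=> /rankO_surj [o oo ro].
exists o => //; have [j mj] := match_ex oo; rewrite mj.
have [ij rj] := match_spec mj.
congr Some; apply: rankI_inj ij ii _.
by rewrite rj ro.
Qed.

Lemma tgt_o (o : {e : gE G1 | output_edge e}) (i : gE G2) : match_in P2 (val o) = Some i ->
  comp_tgt (inr o : compE P1 P2) = inr (Sub (gtgt i) (tgt_not_source _)).
Proof. by move=> h; rewrite /comp_tgt h; exact: lift2_in. Qed.

Lemma L_ll (x y : {e : gE G1 | ~~ output_edge e}) :
  clt (inl (inl x)) (inl (inl y)) = lt1 (val x) (val y).
Proof.
rewrite /comp_lt /= ltn_mul2l eqn_mul2l /=.
exact: (rk_lex irr1 tr1 tot1 (@output_edge G1)).
Qed.
Lemma L_oo (x y : {e : gE G1 | output_edge e}) :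
  clt (inr x) (inr y) = lt1 (val x) (val y).
Proof.
rewrite /comp_lt /= ltn_add2r eqn_add2r ltn_mul2l eqn_mul2l /=.
exact: (rk_lex irr1 tr1 tot1 (@output_edge G1)).
Qed.
Lemma L_lo (x : {e : gE G1 | ~~ output_edge e}) (y : {e : gE G1 | output_edge e}) :
  clt (inl (inl x)) (inr y) = lt1 (val x) (val y).
Proof.
case: x => x hx; case: y => y hy /=.
rewrite /comp_lt /= andbF orbF.
rewrite (rk_leA irr1 tr1 tot1 hx hy) -!rankOE.
by apply/idP/idP; lia.
Qed.
Lemma L_ol (y : {e : gE G1 | output_edge e}) (x : {e : gE G1 | ~~ output_edge e}) :
  clt (inr y) (inl (inl x)) = lt1 (val y) (val x).
Proof.
case: x => x hx; case: y => y hy /=.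
rewrite /comp_lt /= andbF orbF.
rewrite (rk_ltA irr1 tr1 tot1 _ hy) -!rankOE.
by apply/idP/idP; lia.
Qed.

Lemma R_rr (x y : {e : gE G2 | ~~ input_edge e}) :
  clt (inl (inr x)) (inl (inr y)) = lt2 (val x) (val y).
Proof.
case: x => x hx; case: y => y hy /=.
rewrite /comp_lt /=.
have -> : (3 * rankI x - 1 < 3 * rankI y - 1) = (rankI x < rankI y).
  by apply/idP/idP; lia.
have -> : (3 * rankI x - 1 == 3 * rankI y - 1) = (rankI x == rankI y).
  by apply/idP/idP => /eqP h; apply/eqP; lia.
exact: (rk_lex irr2 tr2 tot2 (@input_edge G2)).
Qed.
Lemma R_oo (x y : {e : gE G1 | output_edge e}) i j :
  match_in P2 (val x) = Some i -> match_in P2 (val y) = Some j ->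
  clt (inr x) (inr y) = lt2 i j.
Proof.
case: x => x hx; case: y => y hy /=.
move=> /match_spec [ii ri] /match_spec [ij rj].
rewrite (L_oo (Sub x hx) (Sub y hy)) /= (rk_ltA irr1 tr1 tot1 _ hx) (rk_ltA irr2 tr2 tot2 _ ii).
by rewrite -!rankOE -!rankIE ri rj.
Qed.
Lemma R_ro (x : {e : gE G2 | ~~ input_edge e}) (y : {e : gE G1 | output_edge e}) i :
  match_in P2 (val y) = Some i -> clt (inl (inr x)) (inr y) = lt2 (val x) i.
Proof.
case: x => x hx; case: y => y hy /=.
move=> /match_spec [ii ri].
rewrite /comp_lt /= andbF orbF.
rewrite (rk_leA irr2 tr2 tot2 hx ii) -!rankIE ri.
by apply/idP/idP; lia.
Qed.
Lemma R_or (y : {e : gE G1 | output_edge e}) (x : {e : gE G2 | ~~ input_edge e}) i :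
  match_in P2 (val y) = Some i -> clt (inr y) (inl (inr x)) = lt2 i (val x).
Proof.
case: x => x hx; case: y => y hy /=.
move=> /match_spec [ii ri].
rewrite /comp_lt /= andbF orbF.
rewrite (rk_ltA irr2 tr2 tot2 _ ii) -!rankIE ri.
by apply/idP/idP; lia.
Qed.

Lemma gsrcE (c : compE P1 P2) : @gsrc C c = comp_src c. Proof. by []. Qed.
Lemma gtgtE (c : compE P1 P2) : @gtgt C c = comp_tgt c. Proof. by []. Qed.

Lemma s1 (u : {v : gV G1 | ~~ is_sink v}) : ~~ @is_sink C (inl u).
Proof.
move: (valP u) => /forallPn [f]; rewrite negbK => /eqP hf.
apply/forallPn.
case: (boolP (output_edge f)) => h.
  exists (inr (Sub f h)); rewrite negbK gsrcE src_o; apply/eqP; congr inl.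
  by apply: val_inj; rewrite /= hf.
exists (inl (inl (Sub f h))); rewrite negbK gsrcE src_ll; apply/eqP; congr inl.
by apply: val_inj; rewrite /= hf.
Qed.

Lemma s2 (w : {v : gV G2 | ~~ is_source v}) : @is_sink C (inr w) = is_sink (val w).
Proof.
apply/idP/idP.
  move/forallP=> h; apply/forallP=> f; apply/negP=> /eqP hf.
  have nf : ~~ input_edge f.
    apply/negP=> /input_source; rewrite hf; apply/negP; exact: (valP w).
  have := h (inl (inr (Sub f nf))); rewrite gsrcE src_lr; move/eqP; apply.
  by congr inr; apply: val_inj; rewrite /= hf.
move/forallP=> h; apply/forallP=> -[[x|y]|o].
- by rewrite gsrcE src_ll.
- rewrite gsrcE src_lr; apply/negP=> /eqP [] /(congr1 val) /= hy.
  by have := h (val y); rewrite hy eqxx.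
- by rewrite gsrcE src_o.
Qed.

Lemma s3 (u : {v : gV G2 | ~~ is_source v}) : ~~ @is_source C (inr u).
Proof.
move: (valP u) => /forallPn [f]; rewrite negbK => /eqP hf.
apply/forallPn.
case: (boolP (input_edge f)) => h.
  have [o oo mo] := match_surj h.
  exists (inr (Sub o oo)); rewrite negbK gtgtE (tgt_o (o := Sub o oo) mo); apply/eqP; congr inr.
  by apply: val_inj; rewrite /= hf.
exists (inl (inr (Sub f h))); rewrite negbK gtgtE tgt_lr; apply/eqP; congr inr.
by apply: val_inj; rewrite /= hf.
Qed.

Lemma s4 (w : {v : gV G1 | ~~ is_sink v}) : @is_source C (inl w) = is_source (val w).
Proof.
apply/idP/idP.
  move/forallP=> h; apply/forallP=> f; apply/negP=> /eqP hf.
  have nf : ~~ output_edge f.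
    apply/negP=> /output_sink; rewrite hf; apply/negP; exact: (valP w).
  have := h (inl (inl (Sub f nf))); rewrite gtgtE tgt_ll; move/eqP; apply.
  by congr inl; apply: val_inj; rewrite /= hf.
move/forallP=> h; apply/forallP=> -[[x|y]|o].
- rewrite gtgtE tgt_ll; apply/negP=> /eqP [] /(congr1 val) /= hy.
  by have := h (val x); rewrite hy eqxx.
- by rewrite gtgtE tgt_lr.
- have [i mi] := match_ex (valP o).
  by rewrite gtgtE (tgt_o mi).
Qed.

End CompFacts.


Lemma bnd_nonsource_sink (G : graph) (w : gV G) : boundary w -> ~~ is_source w -> is_sink w.
Proof.
move=> b /forallPn [f]; rewrite negbK => /eqP hf.
by rewrite -hf; apply: bnd_tgt_sink; rewrite hf.
Qed.
Lemma bnd_nonsink_source (G : graph) (w : gV G) : boundary w -> ~~ is_sink w -> is_source w.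
Proof.
move=> b /forallPn [f]; rewrite negbK => /eqP hf.
by rewrite -hf; apply: bnd_src_source; rewrite hf.
Qed.

Section IsoFacts.
Variables Ga Gb : graph.
Variables (fV : gV Ga -> gV Gb) (fE : gE Ga -> gE Gb).
Hypotheses (bV : bijective fV) (bE : bijective fE).
Hypothesis hs : forall e, gsrc (fE e) = fV (gsrc e).
Hypothesis ht : forall e, gtgt (fE e) = fV (gtgt e).

Lemma iso_sink w : is_sink (fV w) = is_sink w.
Proof.
apply/forallP/forallP => h e.
  by apply/negP=> /eqP he; have := h (fE e); rewrite hs he eqxx.
have [g fg gf] := bE.
apply/negP=> /eqP he; have := h (g e); rewrite -(bij_eq bV) -hs gf he eqxx.
by [].
Qed.
Lemma iso_source w : is_source (fV w) = is_source w.
Proof.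
apply/forallP/forallP => h e.
  by apply/negP=> /eqP he; have := h (fE e); rewrite ht he eqxx.
have [g fg gf] := bE.
apply/negP=> /eqP he; have := h (g e); rewrite -(bij_eq bV) -ht gf he eqxx.
by [].
Qed.
End IsoFacts.


Section Part1.
Variable H : popgraph.
Hypothesis popH : is_pop H.
Variable v : gV (pg H).
Hypothesis vint : internal v.
Hypothesis vuniq : forall w, internal w -> w = v.
Variable c0 : gE (pg H).
Hypothesis hc0 : gsrc c0 = v.

Let prH : progressive (pg H). Proof. by case: popH. Qed.
Let irrH : forall e : gE (pg H), ~~ plt e e. Proof. by case: popH => _ [[]]. Qed.
Let trH : forall e1 e2 e3, @plt H e1 e2 -> plt e2 e3 -> plt e1 e3.
Proof. by case: popH => _ [[_ []]]. Qed.
Let totH : forall e1 e2 : gE (pg H), e1 != e2 -> plt e1 e2 || plt e2 e1.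
Proof. by case: popH => _ [[_ []]]. Qed.

Lemma c0_ni : ~~ input_edge c0.
Proof. by rewrite /input_edge hc0. Qed.
Lemma c0_sink : is_sink (gtgt c0).
Proof.
apply: bnd_tgt_sink; apply/negPn/negP=> h.
by have := noloop prH c0; rewrite hc0 (vuniq h) eqxx.
Qed.

Definition x0 (G : popgraph) : compE G H := inl (inr (Sub c0 c0_ni)).

Definition is_ll (G : popgraph) (c : compE G H) : bool :=
  if c is inl (inl _) then true else false.

Definition fH (G : popgraph) (c : compE G H) : gE (pg H) :=
  match c with
  | inl (inl _) => c0
  | inl (inr y) => val y
  | inr o => odflt c0 (match_in H (val o))
  end.

Definition Sk (G : popgraph) (c : compE G H) : bool :=
  @is_sink (comp_graph G H) (comp_tgt c).

Section OneG.
Variable G : popgraph.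
Hypothesis popG : is_pop G.
Hypothesis cd : comp_defined G H.

Lemma Sk_ll (c : compE G H) : is_ll c -> Sk c = false.
Proof.
case: c => [[x|y]|o] // _; rewrite /Sk (tgt_ll H popG); apply/negbTE.
exact: s1.
Qed.

Lemma Sk_H (c : compE G H) : ~~ is_ll c -> Sk c = is_sink (gtgt (fH c)).
Proof.
case: c => [[x|y]|o] // _.
  by rewrite /Sk tgt_lr (s2 G popH).
have [i mi] := match_ex popG popH cd (valP o).
by rewrite /Sk (tgt_o mi) (s2 G popH) /= mi.
Qed.

Lemma lt_H (c c' : compE G H) : ~~ is_ll c -> ~~ is_ll c' ->
  comp_lt c c' = plt (fH c) (fH c').
Proof.
case: c => [[x|y]|o] // _; case: c' => [[x'|y']|o'] // _.
- exact: (R_rr G popH).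
- have [i mi] := match_ex popG popH cd (valP o').
  by rewrite (R_ro popH _ mi) /= mi.
- have [i mi] := match_ex popG popH cd (valP o).
  by rewrite (R_or popH _ mi) /= mi.
- have [i mi] := match_ex popG popH cd (valP o).
  have [i' mi'] := match_ex popG popH cd (valP o').
  by rewrite (R_oo popG popH mi mi') /= mi mi'.
Qed.

Lemma fH_inj : {in [pred c : compE G H | ~~ is_ll c] &, injective (@fH G)}.
Proof.
move=> c c'; rewrite !inE.
case: c => [[x|y]|o] // _; case: c' => [[x'|y']|o'] // _ /=.
- by move=> e; congr (inl (inr _)); apply: val_inj.
- have [i mi] := match_ex popG popH cd (valP o').
  rewrite mi /= => e; have [ii _] := match_spec mi.
  by move: (valP y); rewrite /= e ii.
- have [i mi] := match_ex popG popH cd (valP o).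
  rewrite mi /= => e; have [ii _] := match_spec mi.
  by move: (valP y'); rewrite /= -e ii.
- have [i mi] := match_ex popG popH cd (valP o).
  have [i' mi'] := match_ex popG popH cd (valP o').
  rewrite mi mi' /= => e; rewrite -e in mi'.
  by congr inr; apply: val_inj; exact: (match_inj popG (valP o) (valP o') mi mi').
Qed.

Lemma N_H (z : compE G H) : ~~ is_ll z ->
  #|[set c | Sk c && comp_lt c z]| =
  #|[set h | is_sink (gtgt h) && plt h (fH z)]|.
Proof.
move=> nz.
have sub : {in [set c | Sk c && comp_lt c z] &, injective (@fH G)}.
  move=> c c'; rewrite !inE => /andP [sc _] /andP [sc' _].
  apply: fH_inj; rewrite inE; apply/negP => h.
    by rewrite Sk_ll in sc.
  by rewrite Sk_ll in sc'.
rewrite -(card_in_imset sub); apply: eq_card => h; rewrite inE.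
apply/imsetP/idP.
  case=> c; rewrite inE => /andP [sc lc] ->.
  have nc : ~~ is_ll c by apply/negP=> h0; rewrite Sk_ll in sc.
  by rewrite -Sk_H // sc -lt_H.
move=> /andP [sh lh].
case: (boolP (input_edge h)) => ih.
  have [o oo mo] := match_surj popG popH cd ih.
  exists (inr (Sub o oo) : compE G H); last by rewrite /= mo.
  by rewrite inE Sk_H // lt_H //= mo sh lh.
exists (inl (inr (Sub h ih)) : compE G H) => //.
by rewrite inE Sk_H // lt_H //= sh lh.
Qed.

End OneG.

Section Key.
Variables G1 G2 : popgraph.
Hypotheses (pop1 : is_pop G1) (pop2 : is_pop G2).
Hypotheses (cd1 : comp_defined G1 H) (cd2 : comp_defined G2 H).
Variables (fV : compV G1 H -> compV G2 H) (fE : compE G1 H -> compE G2 H).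
Hypotheses (bV : bijective fV) (bE : bijective fE).
Hypothesis hs : forall e, comp_src (fE e) = fV (comp_src e).
Hypothesis ht : forall e, comp_tgt (fE e) = fV (comp_tgt e).
Hypothesis hl : forall e e', comp_lt (fE e) (fE e') = comp_lt e e'.

Lemma Sk_iso c : Sk (fE c) = Sk c.
Proof.
rewrite /Sk ht.
exact: (@iso_sink (comp_graph G1 H) (comp_graph G2 H) fV fE bV bE hs).
Qed.

Lemma key1 : fE (x0 G1) = x0 G2.
Proof.
have [g fg gf] := bE.
have N12 : #|[set c | Sk c && comp_lt c (fE (x0 G1))]| = #|[set c | Sk c && comp_lt c (x0 G1)]|.
  rewrite -(card_imset _ (bij_inj bE)); apply: eq_card => c; rewrite inE.
  apply/idP/imsetP.
    move=> h; exists (g c); last by rewrite gf.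
    by rewrite inE -Sk_iso -hl gf.
  by case=> d; rewrite inE => hd ->; rewrite Sk_iso hl.
have sy : Sk (fE (x0 G1)) by rewrite Sk_iso Sk_H //= c0_sink.
have ny : ~~ is_ll (fE (x0 G1)) by apply/negP => h; rewrite Sk_ll in sy.
rewrite (N_H pop2 cd2 ny) (N_H pop1 cd1 (z := x0 G1)) // in N12.
have e : fH (fE (x0 G1)) = c0.
  apply: (rk_inj irrH trH totH (A := fun h => is_sink (gtgt h))) => //.
    by rewrite -Sk_H.
  exact: c0_sink.
move: ny e; case: (fE (x0 G1)) => [[x|y]|o] //= _.
  by move=> e; rewrite /x0; congr (inl (inr _)); apply: val_inj.
have [i mi] := match_ex pop2 popH cd2 (valP o).
rewrite mi /= => ei; have [ii _] := match_spec mi.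
by move: c0_ni; rewrite -ei ii.
Qed.

Lemma pv : ~~ is_source v. Proof. have := @internal_nonsource _ prH v vint. exact. Qed.

Lemma src_x0 (G : popgraph) : comp_src (x0 G) = inr (Sub v pv).
Proof. by rewrite src_lr; congr inr; apply: val_inj; rewrite /= hc0. Qed.

Lemma fV_V0 : fV (inr (Sub v pv)) = inr (Sub v pv).
Proof. by rewrite -!(src_x0) -hs key1. Qed.

Lemma inl_pres u : exists u', fV (inl u) = inl u'.
Proof.
case e: (fV (inl u)) => [u'|w]; first by exists u'.
exfalso.
case: (boolP (internal (val w))) => iw.
  have ew : w = Sub v pv by apply: val_inj; rewrite /= (vuniq iw).
  by move: e; rewrite ew -fV_V0 => /(bij_inj bV).
have sw : is_sink (val w).
  apply: bnd_nonsource_sink; first by rewrite /internal negbK in iw.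
  exact: (valP w).
have : @is_sink (comp_graph G2 H) (inr w) by rewrite (s2 G2 popH).
rewrite -e (@iso_sink (comp_graph G1 H) (comp_graph G2 H) fV fE bV bE hs).
by move/negP: (s1 H u).
Qed.

End Key.
Definition toC (G : popgraph) (e : gE (pg G)) : compE G H :=
  match insub e : option {e : gE (pg G) | ~~ output_edge e} with
  | Some x => inl (inl x)
  | None => match insub e : option {e : gE (pg G) | output_edge e} with
            | Some o => inr o
            | None => x0 G
            end
  end.

Lemma caseE (G : popgraph) (e : gE (pg G)) :
  (exists2 x : {e : gE (pg G) | ~~ output_edge e}, e = val x & toC e = inl (inl x)) \/
  (exists2 o : {e : gE (pg G) | output_edge e}, e = val o & toC e = inr o).
Proof.
case: (boolP (output_edge e)) => h.
  right; exists (exist _ e h) => //.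
  by rewrite /toC insubF ?h // insubT.
left; exists (exist _ e h) => //.
by rewrite /toC insubT.
Qed.

Lemma toC_ll (G : popgraph) (x : {e : gE (pg G) | ~~ output_edge e}) : toC (val x) = inl (inl x).
Proof. by rewrite /toC valK. Qed.
Lemma toC_o (G : popgraph) (o : {e : gE (pg G) | output_edge e}) : toC (val o) = inr o.
Proof. by rewrite /toC insubF ?valK // (valP o). Qed.

Lemma toC_inj (G : popgraph) : injective (@toC G).
Proof.
move=> e1 e2.
case: (caseE e1) => [[x1 -> ->]|[o1 -> ->]];
case: (caseE e2) => [[x2 -> ->]|[o2 -> ->]] //.
- by case=> ->.
- by case=> ->.
Qed.

Lemma LtoC (G : popgraph) (popG : is_pop G) (e e' : gE (pg G)) :
  comp_lt (toC e) (toC e') = plt e e'.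
Proof.
case: (caseE e) => [[x -> ->]|[o -> ->]];
case: (caseE e') => [[x' -> ->]|[o' -> ->]].
- exact: (L_ll H popG).
- exact: (L_lo H popG).
- exact: (L_ol H popG).
- exact: (L_oo H popG).
Qed.

Section Build.
Variables G1 G2 : popgraph.
Hypotheses (pop1 : is_pop G1) (pop2 : is_pop G2).
Hypotheses (cd1 : comp_defined G1 H) (cd2 : comp_defined G2 H).
Variables (fV : compV G1 H -> compV G2 H) (fE : compE G1 H -> compE G2 H).
Variables (iV : compV G2 H -> compV G1 H) (iE : compE G2 H -> compE G1 H).
Hypotheses (fgV : cancel fV iV) (gfV : cancel iV fV).
Hypotheses (fgE : cancel fE iE) (gfE : cancel iE fE).
Hypothesis hs : forall e, comp_src (fE e) = fV (comp_src e).
Hypothesis ht : forall e, comp_tgt (fE e) = fV (comp_tgt e).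
Hypothesis hl : forall e e', comp_lt (fE e) (fE e') = comp_lt e e'.
Variable d2 : gE (pg G2).

Let bV : bijective fV. Proof. by exists iV. Qed.
Let bE : bijective fE. Proof. by exists iE. Qed.
Let bV' : bijective iV. Proof. by exists fV. Qed.
Let bE' : bijective iE. Proof. by exists fE. Qed.
Let hs' e : comp_src (iE e) = iV (comp_src e).
Proof. by apply: (bij_inj bV); rewrite -hs !gfE gfV. Qed.
Let ht' e : comp_tgt (iE e) = iV (comp_tgt e).
Proof. by apply: (bij_inj bV); rewrite -ht !gfE gfV. Qed.
Let hl' e e' : comp_lt (iE e) (iE e') = comp_lt e e'.
Proof. by rewrite -hl !gfE. Qed.
Let prG1 : progressive (pg G1). Proof. by case: pop1. Qed.
Let prG2 : progressive (pg G2). Proof. by case: pop2. Qed.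

Lemma inr_pres w : exists w', fV (inr w) = inr w'.
Proof.
case e: (fV (inr w)) => [u'|w']; last by exists w'.
have [u'' e'] := inl_pres pop2 pop1 cd2 cd1 bV' bE' hs' ht' hl' u'.
by move: e'; rewrite -e fgV.
Qed.

Lemma fV_inl u w : fV (inl u) <> inr w.
Proof. by have [u' ->] := inl_pres pop1 pop2 cd1 cd2 bV bE hs ht hl u. Qed.
Lemma fV_inr u w : fV (inr w) <> inl u.
Proof. by have [w' ->] := inr_pres w. Qed.

Lemma E_ll x : exists y, fE (inl (inl x)) = inl (inl y).
Proof.
case e: (fE (inl (inl x))) => [[y|y]|o]; first by exists y.
- have := ht (inl (inl x)); rewrite e tgt_lr (tgt_ll H pop1).
  by move/esym/fV_inl.
- have [i mi] := match_ex pop2 popH cd2 (valP o).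
  have := ht (inl (inl x)); rewrite e (tgt_o mi) (tgt_ll H pop1).
  by move/esym/fV_inl.
Qed.

Lemma E_o o : exists o', fE (inr o) = inr o'.
Proof.
case e: (fE (inr o)) => [[y|y]|o']; last by exists o'.
- have [i mi] := match_ex pop1 popH cd1 (valP o).
  have := ht (inr o); rewrite e (tgt_o mi) (tgt_ll H pop2).
  by move/esym/fV_inr.
- have := hs (inr o); rewrite e src_lr src_o.
  by move/esym/fV_inl.
Qed.

Definition fE1 (e : gE (pg G1)) : gE (pg G2) :=
  match fE (toC e) with
  | inl (inl y) => val y
  | inl (inr _) => d2
  | inr o => val o
  end.

Definition fV1 (u : gV (pg G1)) : gV (pg G2) :=
  match insub u : option {v : gV (pg G1) | ~~ is_sink v} with
  | Some u' => match fV (inl u') with inl x => val x | inr _ => gsrc d2 end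
  | None => match [pick o | gtgt o == u] with
            | Some o => gtgt (fE1 o)
            | None => gsrc d2
            end
  end.

Lemma fE_toC e : fE (toC e) = toC (fE1 e).
Proof.
rewrite /fE1.
case: (caseE e) => [[x -> ->]|[o -> ->]].
  by have [y ->] := E_ll x; rewrite toC_ll.
by have [o' ->] := E_o o; rewrite toC_o.
Qed.

Lemma fE1_inj : injective fE1.
Proof.
move=> e e' h; apply: toC_inj; apply: (bij_inj bE).
by rewrite !fE_toC h.
Qed.

Lemma fE1_lt e e' : plt (fE1 e) (fE1 e') = plt e e'.
Proof. by rewrite -(LtoC pop2) -!fE_toC hl (LtoC pop1). Qed.

Lemma fV1_in u (h : ~~ is_sink u) w : fV (inl (Sub u h)) = inl w -> fV1 u = val w.
Proof. by move=> e; rewrite /fV1 insubT e. Qed.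

Lemma fV1_in' u (h : ~~ is_sink u) w (hw : ~~ is_sink w) :
  fV (inl (Sub u h)) = inl (Sub w hw) -> fV1 u = w.
Proof. by move/fV1_in. Qed.

Lemma fE1_src e : gsrc (fE1 e) = fV1 (gsrc e).
Proof.
case: (caseE e) => [[x -> ex]|[o -> eo]].
  have [y ey] := E_ll x.
  have -> : fE1 (val x) = val y by rewrite /fE1 ex ey.
  symmetry; apply: (fV1_in' (h := src_not_sink (val x)) (hw := src_not_sink (val y))).
  by rewrite -(src_ll H x) -hs ey src_ll.
have [o' eo'] := E_o o.
have -> : fE1 (val o) = val o' by rewrite /fE1 eo eo'.
symmetry; apply: (fV1_in' (h := src_not_sink (val o)) (hw := src_not_sink (val o'))).
by rewrite -(src_o H o) -hs eo' src_o.
Qed.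

Lemma fE1_tgt e : gtgt (fE1 e) = fV1 (gtgt e).
Proof.
case: (caseE e) => [[x -> ex]|[o -> eo]].
  have [y ey] := E_ll x.
  have -> : fE1 (val x) = val y by rewrite /fE1 ex ey.
  symmetry; apply: (fV1_in' (h := nonoutput_nonsink prG1 (valP x)) (hw := nonoutput_nonsink prG2 (valP y))).
  have -> : (inl (Sub (gtgt (val x)) (nonoutput_nonsink prG1 (valP x))) : compV G1 H) = comp_tgt (inl (inl x) : compE G1 H).
    by rewrite (tgt_ll H pop1); congr inl; apply: val_inj.
  rewrite -ht ey (tgt_ll H pop2).
  by congr inl; apply: val_inj.
rewrite /fV1 insubF; last by apply/negbTE; rewrite negbK; apply: output_sink; exact: (valP o).
case: pickP => [o' /eqP e'|/(_ (val o))]; last by rewrite eqxx.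
by rewrite (output_unique (valP o) e').
Qed.

Lemma fE1_out o : output_edge o -> output_edge (fE1 o).
Proof.
move=> oo; have [o' eo'] := E_o (Sub o oo).
have eC : toC o = inr (Sub o oo) := toC_o (Sub o oo).
by rewrite /fE1 eC eo'; exact: (valP o').
Qed.

Lemma fV1_inj : injective fV1.
Proof.
have key : forall u1 u2, ~~ is_sink u1 -> fV1 u1 = fV1 u2 -> u1 = u2.
  move=> u1 u2 h1.
  have [w1 e1] := inl_pres pop1 pop2 cd1 cd2 bV bE hs ht hl (Sub u1 h1).
  rewrite (fV1_in e1).
  case: (boolP (is_sink u2)) => h2.
    have [o oo <-] := sink_in prG1 h2.
    rewrite -fE1_tgt => e.
    by move: (valP w1); rewrite /= e output_sink // fE1_out.
  have [w2 e2] := inl_pres pop1 pop2 cd1 cd2 bV bE hs ht hl (Sub u2 h2).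
  rewrite (fV1_in e2) => /val_inj ew.
  by rewrite -ew -e1 in e2; have := bij_inj bV e2 => -[].
move=> u1 u2.
case: (boolP (is_sink u1)) => h1; last exact: key.
case: (boolP (is_sink u2)) => h2; last by move=> e; symmetry; apply: key.
have [o1 oo1 <-] := sink_in prG1 h1.
have [o2 oo2 <-] := sink_in prG1 h2.
rewrite -!fE1_tgt => e.
by rewrite (fE1_inj (output_unique (fE1_out oo2) e)).
Qed.

End Build.

Lemma H_has_input : 0 < n_inputs H.
Proof.
have : ~~ is_source v by apply: pv.
case/forallPn=> a; rewrite negbK => /eqP ha.
apply/card_gt0P; exists a; rewrite inE.
apply/negPn/negP=> h.
have := noloop prH a; rewrite ha (vuniq h) eqxx //.
Qed.

Lemma out_default (G : popgraph) : comp_defined G H -> exists d : gE (pg G), true.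
Proof.
rewrite /comp_defined /n_outputs => e.
have : 0 < #|[set e : gE (pg G) | output_edge e]| by rewrite e H_has_input.
by case/card_gt0P=> d _; exists d.
Qed.

Lemma part1 (G1 G2 : popgraph) : is_pop G1 -> is_pop G2 ->
  comp_defined G1 H -> comp_defined G2 H ->
  pop_iso (H \oo G1) (H \oo G2) -> pop_iso G1 G2.
Proof.
move=> pop1 pop2 cd1 cd2 [fV [fE [bV bE hs0 ht0 hl0]]].
have hs : forall e, comp_src (fE e) = fV (comp_src e) := hs0.
have ht : forall e, comp_tgt (fE e) = fV (comp_tgt e) := ht0.
have hl : forall e e', comp_lt (fE e) (fE e') = comp_lt e e' := hl0.
have [iV fgV gfV] := bV; have [iE fgE gfE] := bE.
have hs' e : comp_src (iE e) = iV (comp_src e).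
  by apply: (bij_inj bV); rewrite -hs !gfE gfV.
have ht' e : comp_tgt (iE e) = iV (comp_tgt e).
  by apply: (bij_inj bV); rewrite -ht !gfE gfV.
have hl' e e' : comp_lt (iE e) (iE e') = comp_lt e e'.
  by rewrite -hl !gfE.
have [d1 _] := out_default cd1.
have [d2 _] := out_default cd2.
set FE := fE1 fE d2.
set FV := fV1 fV fE d2.
have iFE : injective FE := fE1_inj pop1 pop2 cd1 cd2 fgV gfV fgE gfE hs ht hl (d2 := d2).
have iFV : injective FV := fV1_inj pop1 pop2 cd1 cd2 fgV gfV fgE gfE hs ht hl (d2 := d2).
have iGE := fE1_inj pop2 pop1 cd2 cd1 gfV fgV gfE fgE hs' ht' hl' (d2 := d1).
have iGV := fV1_inj pop2 pop1 cd2 cd1 gfV fgV gfE fgE hs' ht' hl' (d2 := d1).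
exists FV, FE; split.
- exact: (inj_card_bij iFV (@leq_card _ _ _ iGV)).
- exact: (inj_card_bij iFE (@leq_card _ _ _ iGE)).
- exact: fE1_src.
- exact: fE1_tgt.
- exact: fE1_lt.
Qed.

End Part1.


Section Part2.
Variable H : popgraph.
Hypothesis popH : is_pop H.
Variable v : gV (pg H).
Hypothesis vint : internal v.
Hypothesis vuniq : forall w, internal w -> w = v.
Variable a0 : gE (pg H).
Hypothesis ha0 : gtgt a0 = v.

Let prH : progressive (pg H). Proof. by case: popH. Qed.
Let irrH : forall e : gE (pg H), ~~ plt e e. Proof. by case: popH => _ [[]]. Qed.
Let trH : forall e1 e2 e3, @plt H e1 e2 -> plt e2 e3 -> plt e1 e3.
Proof. by case: popH => _ [[_ []]]. Qed.
Let totH : forall e1 e2 : gE (pg H), e1 != e2 -> plt e1 e2 || plt e2 e1.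
Proof. by case: popH => _ [[_ []]]. Qed.

Lemma a0_no : ~~ output_edge a0.
Proof. by rewrite /output_edge ha0. Qed.
Lemma a0_source : is_source (gsrc a0).
Proof.
apply: bnd_src_source; apply/negPn/negP=> h.
by have := noloop prH a0; rewrite ha0 (vuniq h) eqxx.
Qed.

Definition y0 (G : popgraph) : compE H G := inl (inl (Sub a0 a0_no)).

Definition is_lr (G : popgraph) (c : compE H G) : bool :=
  if c is inl (inr _) then true else false.

Definition fH2 (G : popgraph) (c : compE H G) : gE (pg H) :=
  match c with
  | inl (inl x) => val x
  | inl (inr _) => a0
  | inr o => val o
  end.

Definition Sc (G : popgraph) (c : compE H G) : bool :=
  @is_source (comp_graph H G) (comp_src c).

Section OneG2.
Variable G : popgraph.
Hypothesis popG : is_pop G.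
Hypothesis cd : comp_defined H G.

Lemma Sc_lr (c : compE H G) : is_lr c -> Sc c = false.
Proof.
case: c => [[x|y]|o] // _; rewrite /Sc src_lr; apply/negbTE.
exact: (s3 popH popG cd).
Qed.

Lemma Sc_H (c : compE H G) : ~~ is_lr c -> Sc c = is_source (gsrc (fH2 c)).
Proof.
case: c => [[x|y]|o] // _.
  by rewrite /Sc src_ll (s4 popH popG cd).
by rewrite /Sc src_o (s4 popH popG cd).
Qed.

Lemma lt_H2 (c c' : compE H G) : ~~ is_lr c -> ~~ is_lr c' ->
  comp_lt c c' = plt (fH2 c) (fH2 c').
Proof.
case: c => [[x|y]|o] // _; case: c' => [[x'|y']|o'] // _.
- exact: (L_ll G popH).
- exact: (L_lo G popH).
- exact: (L_ol G popH).
- exact: (L_oo G popH).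
Qed.

Lemma fH2_inj : {in [pred c : compE H G | ~~ is_lr c] &, injective (@fH2 G)}.
Proof.
move=> c c'; rewrite !inE.
case: c => [[x|y]|o] // _; case: c' => [[x'|y']|o'] // _ /=.
- by move=> e; congr (inl (inl _)); apply: val_inj.
- by move=> e; move: (valP x) (valP o'); rewrite /= e => /negP nh /nh [].
- by move=> e; move: (valP x') (valP o); rewrite /= -e => /negP nh /nh [].
- by move=> e; congr inr; apply: val_inj.
Qed.

Lemma N_H2 (z : compE H G) : ~~ is_lr z ->
  #|[set c | Sc c && comp_lt c z]| =
  #|[set h | is_source (gsrc h) && plt h (fH2 z)]|.
Proof.
move=> nz.
have sub : {in [set c | Sc c && comp_lt c z] &, injective (@fH2 G)}.
  move=> c c'; rewrite !inE => /andP [sc _] /andP [sc' _].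
  apply: fH2_inj; rewrite inE; apply/negP => h.
    by rewrite Sc_lr in sc.
  by rewrite Sc_lr in sc'.
rewrite -(card_in_imset sub); apply: eq_card => h; rewrite inE.
apply/imsetP/idP.
  case=> c; rewrite inE => /andP [sc lc] ->.
  have nc : ~~ is_lr c by apply/negP=> h0; rewrite Sc_lr in sc.
  by rewrite -Sc_H // sc -lt_H2.
move=> /andP [sh lh].
case: (boolP (output_edge h)) => oh.
  exists (inr (Sub h oh) : compE H G) => //.
  by rewrite inE Sc_H // lt_H2 //= sh lh.
exists (inl (inl (Sub h oh)) : compE H G) => //.
by rewrite inE Sc_H // lt_H2 //= sh lh.
Qed.

End OneG2.

Lemma pvs : ~~ is_sink v.
Proof. have := @internal_nonsink _ prH v vint. exact. Qed.

Lemma tgt_y0 (G : popgraph) : comp_tgt (y0 G) = inl (Sub v pvs).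
Proof. by rewrite (tgt_ll G popH); congr inl; apply: val_inj; rewrite /= ha0. Qed.

Section Key2.
Variables G1 G2 : popgraph.
Hypotheses (pop1 : is_pop G1) (pop2 : is_pop G2).
Hypotheses (cd1 : comp_defined H G1) (cd2 : comp_defined H G2).
Variables (fV : compV H G1 -> compV H G2) (fE : compE H G1 -> compE H G2).
Hypotheses (bV : bijective fV) (bE : bijective fE).
Hypothesis hs : forall e, comp_src (fE e) = fV (comp_src e).
Hypothesis ht : forall e, comp_tgt (fE e) = fV (comp_tgt e).
Hypothesis hl : forall e e', comp_lt (fE e) (fE e') = comp_lt e e'.

Lemma Sc_iso c : Sc (fE c) = Sc c.
Proof.
rewrite /Sc hs.
exact: (@iso_source (comp_graph H G1) (comp_graph H G2) fV fE bV bE ht).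
Qed.

Lemma key2 : fE (y0 G1) = y0 G2.
Proof.
have [g fg gf] := bE.
have N12 : #|[set c | Sc c && comp_lt c (fE (y0 G1))]| = #|[set c | Sc c && comp_lt c (y0 G1)]|.
  rewrite -(card_imset _ (bij_inj bE)); apply: eq_card => c; rewrite inE.
  apply/idP/imsetP.
    move=> h; exists (g c); last by rewrite gf.
    by rewrite inE -Sc_iso -hl gf.
  by case=> d; rewrite inE => hd ->; rewrite Sc_iso hl.
have sy : Sc (fE (y0 G1)) by rewrite Sc_iso Sc_H //= a0_source.
have ny : ~~ is_lr (fE (y0 G1)) by apply/negP => h; rewrite Sc_lr in sy.
rewrite (N_H2 pop2 cd2 ny) (N_H2 pop1 cd1 (z := y0 G1)) // in N12.
have e : fH2 (fE (y0 G1)) = a0.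
  apply: (rk_inj irrH trH totH (A := fun h => is_source (gsrc h))) => //.
    by rewrite -Sc_H.
  exact: a0_source.
move: ny e; case: (fE (y0 G1)) => [[x|y]|o] //= _.
  by move=> e; rewrite /y0; congr (inl (inl _)); apply: val_inj.
by move=> e; move: a0_no (valP o); rewrite /= e => /negP nh /nh [].
Qed.

Lemma fV_V0' : fV (inl (Sub v pvs)) = inl (Sub v pvs).
Proof. by rewrite -!(tgt_y0) -ht key2. Qed.

Lemma inr_pres2 u : exists u', fV (inr u) = inr u'.
Proof.
case e: (fV (inr u)) => [w|u']; last by exists u'.
exfalso.
case: (boolP (internal (val w))) => iw.
  have ew : w = Sub v pvs by apply: val_inj; rewrite /= (vuniq iw).
  by move: e; rewrite ew -fV_V0' => /(bij_inj bV).
have sw : is_source (val w).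
  apply: bnd_nonsink_source; first by rewrite /internal negbK in iw.
  exact: (valP w).
have : @is_source (comp_graph H G2) (inl w) by rewrite (s4 popH pop2 cd2).
rewrite -e (@iso_source (comp_graph H G1) (comp_graph H G2) fV fE bV bE ht).
by move/negP: (s3 popH pop1 cd1 u).
Qed.

End Key2.
Definition toD (G : popgraph) (e : gE (pg G)) : compE H G :=
  match insub e : option {e : gE (pg G) | ~~ input_edge e} with
  | Some y => inl (inr y)
  | None => match [pick o : {o : gE (pg H) | output_edge o} | match_in G (val o) == Some e] with
            | Some o => inr o
            | None => y0 G
            end
  end.

Section OneG3.
Variable G : popgraph.
Hypothesis popG : is_pop G.
Hypothesis cd : comp_defined H G.

Lemma toD_lr (y : {e : gE (pg G) | ~~ input_edge e}) : toD (val y) = inl (inr y).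
Proof. by rewrite /toD valK. Qed.

Lemma toD_o (o : {o : gE (pg H) | output_edge o}) i :
  match_in G (val o) = Some i -> toD i = inr o.
Proof.
move=> mo; have [ii _] := match_spec mo.
rewrite /toD insubF ?ii //.
case: pickP => [o' /eqP mo'|/(_ o)]; last by rewrite mo eqxx.
by congr inr; apply: val_inj; apply: (match_inj popH (valP o') (valP o) mo' mo).
Qed.

Lemma caseD (e : gE (pg G)) :
  (exists2 y : {e : gE (pg G) | ~~ input_edge e}, e = val y & toD e = inl (inr y)) \/
  (exists2 o : {o : gE (pg H) | output_edge o}, match_in G (val o) = Some e & toD e = inr o).
Proof.
case: (boolP (input_edge e)) => h.
  right; have [o oo mo] := match_surj popH popG cd h.
  exists (Sub o oo) => //; exact: toD_o.
left; exists (exist _ e h) => //.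
by rewrite /toD insubT.
Qed.

Lemma toD_inj : injective (@toD G).
Proof.
move=> e1 e2.
case: (caseD e1) => [[x1 -> ->]|[o1 m1 ->]];
case: (caseD e2) => [[x2 -> ->]|[o2 m2 ->]] //.
- by case=> ->.
- by case=> eo; move: m1; rewrite eo m2 => -[].
Qed.

Lemma LtoD (e e' : gE (pg G)) : comp_lt (toD e) (toD e') = plt e e'.
Proof.
case: (caseD e) => [[x -> ->]|[o m ->]];
case: (caseD e') => [[x' -> ->]|[o' m' ->]].
- exact: (R_rr H popG).
- exact: (R_ro popG _ m').
- exact: (R_or popG _ m).
- exact: (R_oo popH popG m m').
Qed.

End OneG3.

Section Build2.
Variables G1 G2 : popgraph.
Hypotheses (pop1 : is_pop G1) (pop2 : is_pop G2).
Hypotheses (cd1 : comp_defined H G1) (cd2 : comp_defined H G2).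
Variables (fV : compV H G1 -> compV H G2) (fE : compE H G1 -> compE H G2).
Variables (iV : compV H G2 -> compV H G1) (iE : compE H G2 -> compE H G1).
Hypotheses (fgV : cancel fV iV) (gfV : cancel iV fV).
Hypotheses (fgE : cancel fE iE) (gfE : cancel iE fE).
Hypothesis hs : forall e, comp_src (fE e) = fV (comp_src e).
Hypothesis ht : forall e, comp_tgt (fE e) = fV (comp_tgt e).
Hypothesis hl : forall e e', comp_lt (fE e) (fE e') = comp_lt e e'.
Variable d2 : gE (pg G2).

Let bV : bijective fV. Proof. by exists iV. Qed.
Let bE : bijective fE. Proof. by exists iE. Qed.
Let bV' : bijective iV. Proof. by exists fV. Qed.
Let bE' : bijective iE. Proof. by exists fE. Qed.
Let hs' e : comp_src (iE e) = iV (comp_src e).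
Proof. by apply: (bij_inj bV); rewrite -hs !gfE gfV. Qed.
Let ht' e : comp_tgt (iE e) = iV (comp_tgt e).
Proof. by apply: (bij_inj bV); rewrite -ht !gfE gfV. Qed.
Let hl' e e' : comp_lt (iE e) (iE e') = comp_lt e e'.
Proof. by rewrite -hl !gfE. Qed.
Let prG1 : progressive (pg G1). Proof. by case: pop1. Qed.
Let prG2 : progressive (pg G2). Proof. by case: pop2. Qed.

Lemma inl_pres2 w : exists w', fV (inl w) = inl w'.
Proof.
case e: (fV (inl w)) => [w'|u']; first by exists w'.
have [u'' e'] := inr_pres2 pop2 pop1 cd2 cd1 bV' bE' hs' ht' hl' u'.
by move: e'; rewrite -e fgV.
Qed.

Lemma fV_inr2 u w : fV (inr u) <> inl w.
Proof. by have [u' ->] := inr_pres2 pop1 pop2 cd1 cd2 bV bE hs ht hl u. Qed.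
Lemma fV_inl2 u w : fV (inl w) <> inr u.
Proof. by have [w' ->] := inl_pres2 w. Qed.

Lemma E_lr y : exists y', fE (inl (inr y)) = inl (inr y').
Proof.
case e: (fE (inl (inr y))) => [[x|y']|o]; last 1 first.
- have := hs (inl (inr y)); rewrite e src_o src_lr.
  by move/esym/fV_inr2.
- have := hs (inl (inr y)); rewrite e src_ll src_lr.
  by move/esym/fV_inr2.
- by exists y'.
Qed.

Lemma E_o2 o : exists o', fE (inr o) = inr o'.
Proof.
case e: (fE (inr o)) => [[x|y]|o']; last by exists o'.
- have [i mi] := match_ex popH pop1 cd1 (valP o).
  have := ht (inr o); rewrite e (tgt_o mi) (tgt_ll G2 popH).
  by move/esym/fV_inr2.
- have := hs (inr o); rewrite e src_lr src_o.
  by move/esym/fV_inl2.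
Qed.

Definition fE2 (e : gE (pg G1)) : gE (pg G2) :=
  match fE (toD e) with
  | inl (inr y) => val y
  | inl (inl _) => d2
  | inr o => odflt d2 (match_in G2 (val o))
  end.

Definition fV2 (u : gV (pg G1)) : gV (pg G2) :=
  match insub u : option {v : gV (pg G1) | ~~ is_source v} with
  | Some u' => match fV (inr u') with inr x => val x | inl _ => gsrc d2 end
  | None => match [pick i | gsrc i == u] with
            | Some i => gsrc (fE2 i)
            | None => gsrc d2
            end
  end.

Lemma fE_toD e : fE (toD e) = toD (fE2 e).
Proof.
rewrite /fE2.
case: (caseD pop1 cd1 e) => [[y -> ->]|[o m ->]].
  by have [y' ->] := E_lr y; rewrite toD_lr.
have [o' ->] := E_o2 o.
have [i' mi'] := match_ex popH pop2 cd2 (valP o').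
by rewrite mi' /= (toD_o mi').
Qed.

Lemma fE2_inj : injective fE2.
Proof.
move=> e e' h; apply: (toD_inj pop1 cd1); apply: (bij_inj bE).
by rewrite !fE_toD h.
Qed.

Lemma fE2_lt e e' : plt (fE2 e) (fE2 e') = plt e e'.
Proof. by rewrite -(LtoD pop2 cd2) -!fE_toD hl (LtoD pop1 cd1). Qed.

Lemma fV2_in' u (h : ~~ is_source u) w (hw : ~~ is_source w) :
  fV (inr (Sub u h)) = inr (Sub w hw) -> fV2 u = w.
Proof. by move=> e; rewrite /fV2 insubT e. Qed.

Lemma fE2_in e : input_edge e -> input_edge (fE2 e).
Proof.
move=> ie; case: (caseD pop1 cd1 e) => [[y ey _]|[o m eo]].
  by move: (valP y); rewrite -ey ie.
have [o' eo'] := E_o2 o.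
have [i' mi'] := match_ex popH pop2 cd2 (valP o').
rewrite /fE2 eo eo' mi' /=.
by have [] := match_spec mi'.
Qed.

Lemma fE2_src e : gsrc (fE2 e) = fV2 (gsrc e).
Proof.
case: (caseD pop1 cd1 e) => [[y -> ey]|[o m eo]].
  have [y' ey'] := E_lr y.
  have -> : fE2 (val y) = val y' by rewrite /fE2 ey ey'.
  symmetry; apply: (fV2_in' (h := noninput_nonsource prG1 (valP y)) (hw := noninput_nonsource prG2 (valP y'))).
  have -> : (inr (Sub (gsrc (val y)) (noninput_nonsource prG1 (valP y))) : compV H G1) = comp_src (inl (inr y) : compE H G1).
    by rewrite src_lr; congr inr; apply: val_inj.
  rewrite -hs ey' src_lr.
  by congr inr; apply: val_inj.
have [ie _] := match_spec m.
rewrite /fV2 insubF; last by apply/negbTE; rewrite negbK; apply: input_source.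
case: pickP => [i' /eqP e'|/(_ e)]; last by rewrite eqxx.
by rewrite (input_unique ie e').
Qed.

Lemma fE2_tgt e : gtgt (fE2 e) = fV2 (gtgt e).
Proof.
case: (caseD pop1 cd1 e) => [[y -> ey]|[o m eo]].
  have [y' ey'] := E_lr y.
  have -> : fE2 (val y) = val y' by rewrite /fE2 ey ey'.
  symmetry; apply: (fV2_in' (h := tgt_not_source (val y)) (hw := tgt_not_source (val y'))).
  by rewrite -(tgt_lr H y) -ht ey' tgt_lr.
have [o' eo'] := E_o2 o.
have [i' mi'] := match_ex popH pop2 cd2 (valP o').
have -> : fE2 e = i' by rewrite /fE2 eo eo' mi'.
symmetry; apply: (fV2_in' (h := tgt_not_source e) (hw := tgt_not_source i')).
by rewrite -(tgt_o m) -ht eo' (tgt_o mi').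
Qed.

Lemma fV2_inj : injective fV2.
Proof.
have key : forall u1 u2, ~~ is_source u1 -> fV2 u1 = fV2 u2 -> u1 = u2.
  move=> u1 u2 h1.
  have [w1 e1] := inr_pres2 pop1 pop2 cd1 cd2 bV bE hs ht hl (Sub u1 h1).
  have -> : fV2 u1 = val w1 by rewrite /fV2 insubT e1.
  case: (boolP (is_source u2)) => h2.
    have [i ii <-] := source_out prG1 h2.
    rewrite -fE2_src => e.
    by move: (valP w1); rewrite /= e input_source // fE2_in.
  have [w2 e2] := inr_pres2 pop1 pop2 cd1 cd2 bV bE hs ht hl (Sub u2 h2).
  have -> : fV2 u2 = val w2 by rewrite /fV2 insubT e2.
  move=> /val_inj ew.
  by rewrite -ew -e1 in e2; have := bij_inj bV e2 => -[].
move=> u1 u2.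
case: (boolP (is_source u1)) => h1; last exact: key.
case: (boolP (is_source u2)) => h2; last by move=> e; symmetry; apply: key.
have [o1 oo1 <-] := source_out prG1 h1.
have [o2 oo2 <-] := source_out prG1 h2.
rewrite -!fE2_src => e.
by rewrite (fE2_inj (input_unique (fE2_in oo2) e)).
Qed.

End Build2.

Lemma H_has_output : 0 < n_outputs H.
Proof.
have : ~~ is_sink v by apply: pvs.
case/forallPn=> a; rewrite negbK => /eqP ha.
apply/card_gt0P; exists a; rewrite inE.
apply/negPn/negP=> h.
have := noloop prH a; rewrite ha (vuniq h) eqxx //.
Qed.

Lemma in_default (G : popgraph) : comp_defined H G -> exists d : gE (pg G), true.
Proof.
rewrite /comp_defined /n_inputs => e.
have : 0 < #|[set e : gE (pg G) | input_edge e]| by rewrite -e H_has_output.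
by case/card_gt0P=> d _; exists d.
Qed.

Lemma part2 (G1 G2 : popgraph) : is_pop G1 -> is_pop G2 ->
  comp_defined H G1 -> comp_defined H G2 ->
  pop_iso (G1 \oo H) (G2 \oo H) -> pop_iso G1 G2.
Proof.
move=> pop1 pop2 cd1 cd2 [fV [fE [bV bE hs0 ht0 hl0]]].
have hs : forall e, comp_src (fE e) = fV (comp_src e) := hs0.
have ht : forall e, comp_tgt (fE e) = fV (comp_tgt e) := ht0.
have hl : forall e e', comp_lt (fE e) (fE e') = comp_lt e e' := hl0.
have [iV fgV gfV] := bV; have [iE fgE gfE] := bE.
have hs' e : comp_src (iE e) = iV (comp_src e).
  by apply: (bij_inj bV); rewrite -hs !gfE gfV.
have ht' e : comp_tgt (iE e) = iV (comp_tgt e).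
  by apply: (bij_inj bV); rewrite -ht !gfE gfV.
have hl' e e' : comp_lt (iE e) (iE e') = comp_lt e e'.
  by rewrite -hl !gfE.
have [d1 _] := in_default cd1.
have [d2 _] := in_default cd2.
set FE := fE2 fE d2.
set FV := fV2 fV fE d2.
have iFE : injective FE := fE2_inj pop1 pop2 cd1 cd2 fgV gfV fgE gfE hs ht hl (d2 := d2).
have iFV : injective FV := fV2_inj pop1 pop2 cd1 cd2 fgV gfV fgE gfE hs ht hl (d2 := d2).
have iGE := fE2_inj pop2 pop1 cd2 cd1 gfV fgV gfE fgE hs' ht' hl' (d2 := d1).
have iGV := fV2_inj pop2 pop1 cd2 cd1 gfV fgV gfE fgE hs' ht' hl' (d2 := d1).
exists FV, FE; split.
- exact: (inj_card_bij iFV (@leq_card _ _ _ iGV)).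
- exact: (inj_card_bij iFE (@leq_card _ _ _ iGE)).
- exact: fE2_src.
- exact: fE2_tgt.
- exact: fE2_lt.
Qed.

End Part2.

Unset Implicit Arguments.

Theorem lemma3p6 (H G1 G2 : popgraph) :
  is_pop H -> elementary (pg H) -> n_internal (pg H) = 1 ->
  is_pop G1 -> is_pop G2 ->
  (comp_defined G1 H -> comp_defined G2 H ->
     pop_iso (H \oo G1) (H \oo G2) -> pop_iso G1 G2) /\
  (comp_defined H G1 -> comp_defined H G2 ->
     pop_iso (G1 \oo H) (G2 \oo H) -> pop_iso G1 G2).
Proof.
move=> popH _ n1 pop1 pop2.
have prH : progressive (pg H) by case: popH.
move: n1; rewrite /n_internal => /eqP /cards1P [v hv].
have vint : internal v.
  have : v \in [set v0 | internal v0] by rewrite hv set11.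
  by rewrite inE.
have vuniq : forall w, internal w -> w = v.
  move=> w iw; have : w \in [set v0 | internal v0] by rewrite inE.
  by rewrite hv inE => /eqP.
have := @internal_nonsink _ prH v vint.
case/forallPn=> c0; rewrite negbK => /eqP hc0.
have := @internal_nonsource _ prH v vint.
case/forallPn=> a0; rewrite negbK => /eqP ha0.
split=> cd1 cd2.
  exact: (part1 popH vint vuniq hc0 pop1 pop2 cd1 cd2).
exact: (part2 popH vint vuniq ha0 pop1 pop2 cd1 cd2).
Qed.
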